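(* Let $G$ be a modular noetherian right $\ell$-group in which the meet $s^{-1} := \bigwedge X(G^-)$ exists. Then the join of all elements covering $e$ exists and equals $s$: \[ s = \bigvee \{ g \in G : g \succ e\}. \] Moreover, the interval $[e,s]$ is a modular geometric lattice.
   Context: A right $\ell$-group is a group $G$ (identity $e$) with a right-invariant partial order making $G$ a lattice. It is modular if the lattice is modular. It is noetherian if for each $g$ the set $\{h \geq g\}$ satisfies the descending chain condition and the set $\{h \leq g\}$ satisfies the ascending chain condition. $G^- = \{g \leq e\}$ and $X(G^-)$ is the set of elements covered by $e$. The notation $g \succ e$ means that $g$ covers $e$. A modular lattice of finite length is geometric if every element is the join of a finite (possibly empty) set of atoms. *)

(* Defs.v *)
From Stdlib Require Import List Arith.
Import ListNotations.

Set Implicit Arguments.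
Section OrderNotions.
Variable T : Type.
Variable le : T -> T -> Prop.

(* [P] is a subset of T; all notions are relative to the induced order on P. *)
Definition pair (a b : T) : T -> Prop := fun z => z = a \/ z = b.

Definition lub_in (P : T -> Prop) (A : T -> Prop) (x : T) : Prop :=
  P x /\ (forall a, A a -> le a x) /\
  (forall y, P y -> (forall a, A a -> le a y) -> le x y).

Definition glb_in (P : T -> Prop) (A : T -> Prop) (x : T) : Prop :=
  P x /\ (forall a, A a -> le x a) /\
  (forall y, P y -> (forall a, A a -> le y a) -> le y x).

Definition covers_in (P : T -> Prop) (a b : T) : Prop :=
  P a /\ P b /\ le b a /\ a <> b /\
  (forall c, P c -> le b c -> le c a -> c = b \/ c = a).

Definition partial_order : Prop :=
  (forall a, le a a) /\ (forall a b, le a b -> le b a -> a = b) /\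
  (forall a b c, le a b -> le b c -> le a c).

Definition lattice_on (P : T -> Prop) : Prop :=
  forall a b, P a -> P b ->
    (exists x, lub_in P (pair a b) x) /\ (exists x, glb_in P (pair a b) x).

(* modular law: a <= c -> a v (b ^ c) = (a v b) ^ c *)
Definition modular_on (P : T -> Prop) : Prop :=
  forall a b c x y z w, P a -> P b -> P c -> le a c ->
    glb_in P (pair b c) x -> lub_in P (pair a x) y ->
    lub_in P (pair a b) z -> glb_in P (pair z c) w -> y = w.

Definition finite_length_on (P : T -> Prop) : Prop :=
  exists n, forall (k : nat) (f : nat -> T),
    (forall i, i <= k -> P (f i)) ->
    (forall i, i < k -> le (f i) (f (S i)) /\ f i <> f (S i)) -> k <= n.

Definition atom_on (P : T -> Prop) (x : T) : Prop :=
  exists b, (P b /\ forall y, P y -> le b y) /\ covers_in P x b.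

Definition modular_geometric_on (P : T -> Prop) : Prop :=
  lattice_on P /\ modular_on P /\ finite_length_on P /\
  forall x, P x -> exists l : list T,
    (forall a, In a l -> atom_on P a) /\ lub_in P (fun a => In a l) x.

Definition noetherian : Prop :=
  forall g,
    (forall f : nat -> T, (forall n, le g (f n)) -> (forall n, le (f (S n)) (f n)) ->
       exists N, forall n, N <= n -> f n = f N) /\
    (forall f : nat -> T, (forall n, le (f n) g) -> (forall n, le (f n) (f (S n))) ->
       exists N, forall n, N <= n -> f n = f N).

End OrderNotions.

Definition setT {T : Type} : T -> Prop := fun _ => True.

Definition right_lgroup (T : Type) (mul : T -> T -> T) (inv : T -> T) (e : T)
  (le : T -> T -> Prop) : Prop :=
  (forall a b c, mul (mul a b) c = mul a (mul b c)) /\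
  (forall a, mul e a = a) /\ (forall a, mul a e = a) /\
  (forall a, mul (inv a) a = e) /\ (forall a, mul a (inv a) = e) /\
  partial_order le /\
  (forall g h k, le g h -> le (mul g k) (mul h k)) /\
  lattice_on le setT.

(* Main.v *)
Require Import Defs.
From Stdlib Require Import List Arith Lia Classical ClassicalEpsilon.
Import ListNotations.
Set Implicit Arguments.

Definition lubL {T} (le : T -> T -> Prop) z l w :=
  lub_in le setT (fun x => x = z \/ In x l) w.
Definition glbL {T} (le : T -> T -> Prop) z l w :=
  glb_in le setT (fun x => x = z \/ In x l) w.

Lemma lub_pair_comm T (le : T -> T -> Prop) P a b x :
  lub_in le P (pair a b) x -> lub_in le P (pair b a) x.
Proof.
  intros [Px [U L]]; split; [exact Px|split].
  - intros q [-> | ->]; apply U; [right|left]; reflexivity.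
  - intros y Py Hy; apply L; [exact Py|]. intros q [-> | ->]; apply Hy; [right|left]; reflexivity.
Qed.

Lemma glb_pair_comm T (le : T -> T -> Prop) P a b x :
  glb_in le P (pair a b) x -> glb_in le P (pair b a) x.
Proof.
  intros [Px [U L]]; split; [exact Px|split].
  - intros q [-> | ->]; apply U; [right|left]; reflexivity.
  - intros y Py Hy; apply L; [exact Py|]. intros q [-> | ->]; apply Hy; [right|left]; reflexivity.
Qed.

Lemma ex_min (P : nat -> Prop) : (exists n, P n) -> exists n, P n /\ forall m, m < n -> ~ P m.
Proof.
  intros [n Hn].
  assert (H : forall k, forall n, n <= k -> P n -> exists n, P n /\ forall m, m < n -> ~ P m).
  { induction k as [|k IH]; intros n0 Hle Hn0.
    - exists n0; split; [exact Hn0|]. intros m Hm; lia.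
    - destruct (classic (exists m, m < n0 /\ P m)) as [[m [Hm1 Hm2]]|Hno].
      + apply (IH m); [lia|exact Hm2].
      + exists n0; split; [exact Hn0|]. intros m Hm Pm; apply Hno; eauto. }
  exact (H n n (le_n n) Hn).
Qed.

Section Basic.
Variable T : Type.
Variable le : T -> T -> Prop.
Hypothesis Hpo : partial_order le.
Hypothesis Hlat : lattice_on le setT.
Hypothesis Hmod : modular_on le setT.

Lemma le_refl a : le a a. Proof. destruct Hpo as [H _]; apply H. Qed.
Lemma le_anti a b : le a b -> le b a -> a = b. Proof. destruct Hpo as [_ [H _]]; apply H. Qed.
Lemma le_trans a b c : le a b -> le b c -> le a c. Proof. destruct Hpo as [_ [_ H]]; eapply H; eauto. Qed.

Lemma Hlat2 (a b : T) : (exists x, lub_in le setT (pair a b) x) /\ (exists x, glb_in le setT (pair a b) x).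
Proof. apply Hlat; exact I. Qed.
Definition join a b := proj1_sig (constructive_indefinite_description _ (proj1 (Hlat2 a b))).
Definition meet a b := proj1_sig (constructive_indefinite_description _ (proj2 (Hlat2 a b))).

Lemma join_spec a b : lub_in le setT (pair a b) (join a b).
Proof. unfold join. destruct (constructive_indefinite_description _ _) as [x Hx]. exact Hx. Qed.
Lemma meet_spec a b : glb_in le setT (pair a b) (meet a b).
Proof. unfold meet. destruct (constructive_indefinite_description _ _) as [x Hx]. exact Hx. Qed.

Lemma join_l a b : le a (join a b).
Proof. destruct (join_spec a b) as [_ [H _]]. apply H. left; reflexivity. Qed.
Lemma join_r a b : le b (join a b).
Proof. destruct (join_spec a b) as [_ [H _]]. apply H. right; reflexivity. Qed.
Lemma join_min a b c : le a c -> le b c -> le (join a b) c.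
Proof. intros H1 H2. destruct (join_spec a b) as [_ [_ H]]. apply H; [exact I|].
  intros x [-> | ->]; auto. Qed.
Lemma meet_l a b : le (meet a b) a.
Proof. destruct (meet_spec a b) as [_ [H _]]. apply H. left; reflexivity. Qed.
Lemma meet_r a b : le (meet a b) b.
Proof. destruct (meet_spec a b) as [_ [H _]]. apply H. right; reflexivity. Qed.
Lemma meet_max a b c : le c a -> le c b -> le c (meet a b).
Proof. intros H1 H2. destruct (meet_spec a b) as [_ [_ H]]. apply H; [exact I|].
  intros x [-> | ->]; auto. Qed.

Lemma lub_uniq P A x y : lub_in le P A x -> lub_in le P A y -> x = y.
Proof. intros [Px [Ux Lx]] [Py [Uy Ly]]. apply le_anti; [apply Lx|apply Ly]; auto. Qed.
Lemma glb_uniq P A x y : glb_in le P A x -> glb_in le P A y -> x = y.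
Proof. intros [Px [Ux Lx]] [Py [Uy Ly]]. apply le_anti; [apply Ly|apply Lx]; auto. Qed.

Lemma modl a b c : le a c -> join a (meet b c) = meet (join a b) c.
Proof. intro H. eapply Hmod; [exact I|exact I|exact I|exact H|apply meet_spec|apply join_spec|apply join_spec|apply meet_spec]. Qed.

Lemma join_eq a b : le a b -> join a b = b.
Proof. intro H; apply le_anti; [apply join_min; auto using le_refl|apply join_r]. Qed.
Lemma join_eq' a b : le b a -> join a b = a.
Proof. intro H; apply le_anti; [apply join_min; auto using le_refl|apply join_l]. Qed.
Lemma meet_eq a b : le a b -> meet a b = a.
Proof. intro H; apply le_anti; [apply meet_l|apply meet_max; auto using le_refl]. Qed.
Lemma meet_eq' a b : le b a -> meet a b = b.
Proof. intro H; apply le_anti; [apply meet_r|apply meet_max; auto using le_refl]. Qed.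
Lemma join_comm a b : join a b = join b a.
Proof. apply le_anti; apply join_min; auto using join_l, join_r. Qed.
Lemma meet_comm a b : meet a b = meet b a.
Proof. apply le_anti; apply meet_max; auto using meet_l, meet_r. Qed.

Local Notation cov a b := (covers_in le setT a b).

Lemma cov_intro a b : le b a -> a <> b -> (forall c, le b c -> le c a -> c = b \/ c = a) -> cov a b.
Proof. intros; repeat split; auto. Qed.
Lemma cov_le a b : cov a b -> le b a. Proof. intros (_&_&H&_); exact H. Qed.
Lemma cov_neq a b : cov a b -> a <> b. Proof. intros (_&_&_&H&_); exact H. Qed.
Lemma cov_btw a b c : cov a b -> le b c -> le c a -> c = b \/ c = a.
Proof. intros (_&_&_&_&H) H1 H2; apply H; auto. exact I. Qed.

Lemma CU x y : cov y (meet x y) -> cov (join x y) x.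
Proof.
  intro Hc. apply cov_intro.
  - apply join_l.
  - intro Heq. apply (cov_neq Hc). rewrite meet_eq'; auto.
    rewrite <- Heq. apply join_r.
  - intros c H1 H2.
    destruct (cov_btw Hc (c:=meet c y)) as [E|E].
    + apply meet_max; [eapply le_trans; [apply meet_l|exact H1]|apply meet_r].
    + apply meet_r.
    + left. rewrite <- (meet_eq' H2). rewrite <- (modl y H1).
      rewrite meet_comm, E. apply join_eq'. apply meet_l.
    + right. apply le_anti; auto. apply join_min; auto.
      rewrite <- E. apply meet_l.
Qed.

Lemma CD x y : cov (join x y) x -> cov y (meet x y).
Proof.
  intro Hc. apply cov_intro.
  - apply meet_r.
  - intro Heq. apply (cov_neq Hc). apply join_eq'. rewrite Heq. apply meet_l.
  - intros c H1 H2.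
    destruct (cov_btw Hc (c:=join x c)) as [E|E].
    + apply join_l.
    + apply join_min; [apply join_l| eapply le_trans; [exact H2|apply join_r]].
    + left. apply le_anti; auto. apply meet_max; auto.
      rewrite <- E. apply join_r.
    + right. pose proof (modl x H2) as M.
      rewrite (join_eq' H1) in M. rewrite join_comm, E in M.
      rewrite meet_eq' in M; auto. apply join_r.
Qed.

Lemma eq_proj x y u : le x y -> meet x u = meet y u -> join x u = join y u -> x = y.
Proof.
  intros Hxy Hm Hj.
  pose proof (modl u Hxy) as M.
  rewrite Hj in M. rewrite (meet_eq' (join_l y u)) in M.
  rewrite meet_comm, <- Hm in M. rewrite (join_eq' (meet_l x u)) in M. exact M.
Qed.

Lemma lubL_nil z : lubL le z [] z.
Proof. split; [exact I|split].
  - intros x [->|[]]; apply le_refl.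
  - intros y _ H; apply H; left; reflexivity. Qed.
Lemma glbL_nil z : glbL le z [] z.
Proof. split; [exact I|split].
  - intros x [->|[]]; apply le_refl.
  - intros y _ H; apply H; left; reflexivity. Qed.

Lemma lubL_cons z l w a : lubL le z l w -> lubL le z (a :: l) (join a w).
Proof.
  intros [_ [U L]]. split; [exact I|split].
  - intros x [->|[->|Hx]].
    + eapply le_trans; [apply U; left; reflexivity|apply join_r].
    + apply join_l.
    + eapply le_trans; [apply U; right; exact Hx|apply join_r].
  - intros y _ H. apply join_min.
    + apply H; right; left; reflexivity.
    + apply L; [exact I|]. intros x [->|Hx]; apply H; [left; reflexivity|right; right; exact Hx].
Qed.
Lemma glbL_cons z l w a : glbL le z l w -> glbL le z (a :: l) (meet a w).
Proof.
  intros [_ [U L]]. split; [exact I|split].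
  - intros x [->|[->|Hx]].
    + eapply le_trans; [apply meet_r|apply U; left; reflexivity].
    + apply meet_l.
    + eapply le_trans; [apply meet_r|apply U; right; exact Hx].
  - intros y _ H. apply meet_max.
    + apply H; right; left; reflexivity.
    + apply L; [exact I|]. intros x [->|Hx]; apply H; [left; reflexivity|right; right; exact Hx].
Qed.
Lemma lubL_ex z l : exists w, lubL le z l w.
Proof. induction l as [|a l [w Hw]]; [exists z; apply lubL_nil|exists (join a w); apply lubL_cons; auto]. Qed.
Lemma glbL_ex z l : exists w, glbL le z l w.
Proof. induction l as [|a l [w Hw]]; [exists z; apply glbL_nil|exists (meet a w); apply glbL_cons; auto]. Qed.

Lemma lemA : forall l z w, (forall a, In a l -> cov a z) -> lubL le z l w ->
  exists ml, (forall m, In m ml -> cov w m) /\ glbL le w ml z.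
Proof.
  induction l as [|a l IH]; intros z w Ha Hw.
  - rewrite (lub_uniq Hw (lubL_nil z)). exists []. split; [intros m []|apply glbL_nil].
  - destruct (lubL_ex z l) as [w' Hw'].
    rewrite (lub_uniq Hw (lubL_cons a Hw')).
    destruct (IH z w' (fun b Hb => Ha b (or_intror Hb)) Hw') as [ml' [Hml' Hg']].
    assert (Hzw' : le z w') by (destruct Hw' as [_ [U _]]; apply U; left; reflexivity).
    assert (Haz : cov a z) by (apply Ha; left; reflexivity).
    destruct (classic (le a w')) as [Haw|Haw].
    + rewrite (join_eq Haw). exists ml'. auto.
    + assert (Hm : meet w' a = z).
      { destruct (cov_btw Haz (c:=meet w' a)) as [E|E].
        - apply meet_max; auto. apply cov_le; auto.
        - apply meet_r.
        - exact E.
        - exfalso; apply Haw. rewrite <- E. apply meet_l. }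
      assert (Hcw : cov (join w' a) w') by (apply CU; rewrite Hm; exact Haz).
      rewrite join_comm.
      exists (w' :: map (fun m => join m a) ml'). split.
      * intros m [<-|Hm2]; [exact Hcw|].
        apply in_map_iff in Hm2 as [m0 [<- Hm0]].
        assert (Hm0w : le m0 w') by (apply cov_le; auto).
        assert (Hzm0 : le z m0) by (destruct Hg' as [_ [U _]]; apply U; right; exact Hm0).
        assert (E : meet (join m0 a) w' = m0).
        { rewrite <- (modl a Hm0w). rewrite meet_comm, Hm. apply join_eq'; auto. }
        assert (E2 : join (join m0 a) w' = join w' a).
        { apply le_anti.
          - apply join_min; [apply join_min|apply join_l].
            + eapply le_trans; [exact Hm0w|apply join_l].
            + apply join_r.
          - apply join_min; [apply join_r|].
            eapply le_trans; [apply join_r|apply join_l]. }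
        rewrite <- E2. apply CU. rewrite E. apply Hml'; auto.
      * split; [exact I|split].
        -- intros x [->|[->|Hx]].
           ++ eapply le_trans; [exact Hzw'|apply join_l].
           ++ exact Hzw'.
           ++ apply in_map_iff in Hx as [m0 [<- Hm0]].
              eapply le_trans; [|apply join_l].
              destruct Hg' as [_ [U _]]; apply U; right; exact Hm0.
        -- intros y _ H. pose proof Hg' as [_ [_ L]]. apply L; [exact I|].
           assert (Hyw : le y w') by (apply H; right; left; reflexivity).
           intros x [->|Hx]; [exact Hyw|].
           assert (Hm0w : le x w') by (apply cov_le; auto).
           rewrite <- (meet_eq (le_refl x)) at 1.
           assert (E : meet (join x a) w' = x).
           { rewrite <- (modl a Hm0w). rewrite meet_comm, Hm. apply join_eq'.
             destruct Hg' as [_ [U _]]; apply U; right; exact Hx. }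
           rewrite meet_eq by apply le_refl.
           rewrite <- E. apply meet_max; [|exact Hyw].
           apply H. right; right. apply in_map_iff. exists x; auto.
Qed.

Lemma meet_mono x y u : le x y -> le (meet x u) (meet y u).
Proof. intro H. apply meet_max; [eapply le_trans; [apply meet_l|exact H]|apply meet_r]. Qed.

Lemma chain_mono (f : nat -> T) k : (forall i, i < k -> le (f i) (f (S i)) /\ f i <> f (S i)) ->
  forall i j, i <= j -> j <= k -> le (f i) (f j).
Proof.
  intros H i j Hij Hjk. induction j as [|j IH].
  - assert (i=0) by lia; subst; apply le_refl.
  - destruct (Nat.eq_dec i (S j)) as [->|Hne]; [apply le_refl|].
    eapply le_trans; [apply IH; lia|apply H; lia].
Qed.

Lemma lemFL : forall l z w, (forall a, In a l -> cov a z) -> lubL le z l w ->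
  forall k f, (forall i, i <= k -> le z (f i) /\ le (f i) w) ->
  (forall i, i < k -> le (f i) (f (S i)) /\ f i <> f (S i)) -> k <= length l.
Proof.
  induction l as [|a l IH]; intros z w Ha Hw k f Hf Hc.
  - rewrite (lub_uniq Hw (lubL_nil z)) in Hf. destruct k as [|k]; [lia|]. exfalso.
    destruct (Hc 0 ltac:(lia)) as [_ Hne]. apply Hne.
    destruct (Hf 0 ltac:(lia)), (Hf 1 ltac:(lia)).
    transitivity z; [apply le_anti|symmetry; apply le_anti]; auto.
  - destruct (lubL_ex z l) as [w' Hw']. rewrite (lub_uniq Hw (lubL_cons a Hw')) in Hf. simpl.
    assert (IH' := IH z w' (fun b Hb => Ha b (or_intror Hb)) Hw').
    destruct (classic (forall i, i <= k -> le (f i) w')) as [Hall|Hex].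
    + assert (k <= length l); [|lia]. apply (IH' k f); auto.
      intros i Hi; split; [apply Hf; auto|apply Hall; auto].
    + apply not_all_ex_not in Hex as [i0 Hi0].
      destruct (ex_min (fun i => i <= k /\ ~ le (f i) w')) as [j [[Hjk Hj] Hmin]].
      { exists i0. apply imply_to_and in Hi0; exact Hi0. }
      assert (Hbef : forall i, i < j -> le (f i) w').
      { intros i Hi. apply NNPP. intro Hn. apply (Hmin i Hi). split; [lia|exact Hn]. }
      assert (Hzw' : le z w') by (destruct Hw' as [_ [U _]]; apply U; left; reflexivity).
      assert (Haw : ~ le a w').
      { intro Haw. rewrite (join_eq Haw) in Hf. apply Hj. apply Hf; auto. }
      assert (Haz : cov a z) by (apply Ha; left; reflexivity).
      assert (Hm : meet w' a = z).
      { destruct (cov_btw Haz (c:=meet w' a)) as [E|E].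
        - apply meet_max; auto. apply cov_le; auto.
        - apply meet_r.
        - exact E.
        - exfalso; apply Haw. rewrite <- E. apply meet_l. }
      assert (Hcw : cov (join w' a) w') by (apply CU; rewrite Hm; exact Haz).
      rewrite join_comm in Hf.
      assert (Haft : forall i, j <= i -> i <= k -> join (f i) w' = join w' a).
      { intros i H1 H2. destruct (cov_btw Hcw (c := join (f i) w')) as [E|E].
        - apply join_r.
        - apply join_min; [apply Hf; auto|apply join_l].
        - exfalso. apply Hj. eapply le_trans; [apply (@chain_mono f k Hc j i H1 H2)|].
          rewrite <- E. apply join_l.
        - exact E. }
      destruct k as [|k]; [lia|].
      set (h := fun i => if i <? j then f i else meet (f (S i)) w').
      assert (k <= length l); [|lia].
      apply (IH' k h).
      * intros i Hi. unfold h. destruct (Nat.ltb_spec i j).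
        -- split; [apply Hf; lia| apply Hbef; auto].
        -- split; [apply meet_max; [apply Hf; lia|exact Hzw']|apply meet_r].
      * intros i Hi. unfold h. destruct (Nat.ltb_spec i j); destruct (Nat.ltb_spec (S i) j).
        -- apply Hc; lia.
        -- assert (Hij : S i = j) by lia. subst j.
           assert (Hle : le (f i) (meet (f (S i)) w')).
           { apply meet_max; [apply Hc; lia|apply Hbef; auto]. }
           assert (Hmo : le (meet (f (S i)) w') (meet (f (S (S i))) w')).
           { apply meet_mono. apply Hc; lia. }
           split.
           ++ eapply le_trans; [exact Hle|exact Hmo].
           ++ intro E. destruct (Hc (S i) ltac:(lia)) as [Hl Hne]. apply Hne.
              apply (eq_proj w'); [exact Hl| |].
              ** apply le_anti; [exact Hmo|]. rewrite <- E; exact Hle.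
              ** rewrite !Haft; auto; lia.
        -- lia.
        -- destruct (Hc (S i) ltac:(lia)) as [Hl Hne]. split.
           ++ apply meet_mono; exact Hl.
           ++ intro E. apply Hne. apply (eq_proj w'); [exact Hl|exact E|].
              rewrite !Haft; auto; lia.
Qed.

Lemma restrict x w : le x w -> forall ml, (forall m, In m ml -> cov w m) ->
  exists ml2, (forall m, In m ml2 -> cov x m) /\
  (forall y, le y x -> ((forall m, In m ml -> le y m) <-> (forall m, In m ml2 -> le y m))).
Proof.
  intros Hxw. induction ml as [|m ml IH]; intros Hml.
  - exists []. split; [intros m []|]. intros y _; split; intros _ m [].
  - destruct IH as [ml2 [H1 H2]]; [intros; apply Hml; right; auto|].
    assert (Hwm : cov w m) by (apply Hml; left; auto).
    destruct (classic (le x m)) as [Hxm|Hxm].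
    + exists ml2. split; auto. intros y Hy; split.
      * intros H m' Hm'. apply (proj1 (H2 y Hy)); auto. intros; apply H; right; auto.
      * intros H m' [<-|Hm']; [eapply le_trans; eauto|]. apply (proj2 (H2 y Hy)); auto.
    + exists (meet m x :: ml2). split.
      * intros m' [<-|Hm']; auto. apply CD.
        assert (E : join m x = w).
        { destruct (cov_btw Hwm (c:=join m x)) as [E|E];
            [apply join_l|apply join_min; [apply cov_le; auto|auto]| |auto].
          exfalso; apply Hxm. rewrite <- E; apply join_r. }
        rewrite E; exact Hwm.
      * intros y Hy; split.
        -- intros H m' [<-|Hm'].
           ++ apply meet_max; auto. apply H; left; auto.
           ++ apply (proj1 (H2 y Hy)); auto. intros; apply H; right; auto.
        -- intros H m' [<-|Hm'].
           ++ eapply le_trans; [apply H; left; reflexivity|apply meet_l].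
           ++ apply (proj2 (H2 y Hy)); auto. intros; apply H; right; auto.
Qed.

End Basic.


Section Flip.
Variable T : Type.
Variable le : T -> T -> Prop.
Hypothesis Hpo : partial_order le.
Hypothesis Hlat : lattice_on le setT.
Hypothesis Hmod : modular_on le setT.
Let le' := fun x y : T => le y x.

Lemma po_flip : partial_order le'.
Proof.
  destruct Hpo as [H1 [H2 H3]]. unfold le'. split; [|split]; auto.
  intros a b c Hab Hbc. eapply H3; eauto.
Qed.

Lemma lat_flip : lattice_on le' setT.
Proof.
  intros a b Ha Hb. destruct (Hlat Ha Hb) as [[x Hx] [y Hy]].
  split; [exists y|exists x]; assumption.
Qed.

Lemma mod_flip : modular_on le' setT.
Proof.
  intros a b c x y z w Ha Hb Hc Hca Hx Hy Hz Hw.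
  symmetry.
  eapply Hmod; [exact Hc|exact Hb|exact Ha|exact Hca| | | |].
  - apply glb_pair_comm. exact Hz.
  - apply lub_pair_comm. exact Hw.
  - apply lub_pair_comm. exact Hx.
  - apply glb_pair_comm. exact Hy.
Qed.

Lemma cov_flip a b : covers_in le setT a b -> covers_in le' setT b a.
Proof.
  intros (Pa&Pb&H1&H2&H3). unfold le'. repeat split; auto.
  intros c Pc Hc1 Hc2. destruct (H3 c Pc Hc2 Hc1); auto.
Qed.
Lemma cov_unflip a b : covers_in le' setT b a -> covers_in le setT a b.
Proof.
  intros (Pa&Pb&H1&H2&H3). unfold le' in *. repeat split; auto.
  intros c Pc Hc1 Hc2. destruct (H3 c Pc Hc2 Hc1); auto.
Qed.

Lemma lemA' : forall l z w, (forall a, In a l -> covers_in le setT z a) ->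
  glb_in le setT (fun x => x = z \/ In x l) w ->
  exists ml, (forall m, In m ml -> covers_in le setT m w) /\
    lub_in le setT (fun x => x = w \/ In x ml) z.
Proof.
  intros l z w Ha Hw.
  destruct (@lemA T le' po_flip lat_flip mod_flip l z w) as [ml [H1 H2]].
  - intros a Hin. apply cov_flip. auto.
  - exact Hw.
  - exists ml. split; [|exact H2]. intros m Hm. apply cov_unflip. auto.
Qed.

Lemma atomistic l z w x : (forall a, In a l -> covers_in le setT a z) -> lubL le z l w ->
  le z x -> le x w ->
  exists lx, (forall b, In b lx -> covers_in le setT b z) /\ lubL le z lx x.
Proof.
  intros Ha Hw Hzx Hxw.
  destruct (lemA Hpo Hlat Hmod Ha Hw) as [ml [Hml Hg]].
  destruct (restrict Hpo Hlat Hmod x Hxw ml Hml) as [ml2 [H1 H2]].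
  assert (Hglb : glb_in le setT (fun y => y = x \/ In y ml2) z).
  { destruct Hg as [_ [U L]]. split; [exact I|split].
    + intros y [->|Hy]; [exact Hzx|].
      eapply (proj1 (H2 z Hzx)); [|exact Hy]. intros m Hm; apply U; right; exact Hm.
    + intros y _ Hy. apply L; [exact I|].
      assert (Hyx : le y x) by (apply Hy; left; auto).
      intros m [->|Hm].
      * destruct Hpo as [_ [_ Tr]]. eapply Tr; eauto.
      * eapply (proj2 (H2 y Hyx)); [|exact Hm]. intros m' Hm'; apply Hy; right; exact Hm'. }
  destruct (lemA' ml2 H1 Hglb) as [lx [Hlx Hlub]].
  exists lx. split; auto.
Qed.
End Flip.


Fixpoint rpow {T} (mul : T -> T -> T) (e r : T) (n : nat) : T :=
  match n with 0 => e | S n => mul r (rpow mul e r n) end.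

Section Grp.
Variable T : Type.
Variables (mul : T -> T -> T) (inv : T -> T) (e : T) (le : T -> T -> Prop).
Hypothesis HG : right_lgroup mul inv e le.
Hypothesis Hmod : modular_on le setT.
Hypothesis Hno : noetherian le.

Lemma assoc a b c : mul (mul a b) c = mul a (mul b c). Proof. destruct HG as (H&_); apply H. Qed.
Lemma idl a : mul e a = a. Proof. destruct HG as (_&H&_); apply H. Qed.
Lemma idr a : mul a e = a. Proof. destruct HG as (_&_&H&_); apply H. Qed.
Lemma invl a : mul (inv a) a = e. Proof. destruct HG as (_&_&_&H&_); apply H. Qed.
Lemma invr a : mul a (inv a) = e. Proof. destruct HG as (_&_&_&_&H&_); apply H. Qed.
Lemma Hpo : partial_order le. Proof. destruct HG as (_&_&_&_&_&H&_); apply H. Qed.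
Lemma rinv g h k : le g h -> le (mul g k) (mul h k). Proof. destruct HG as (_&_&_&_&_&_&H&_); apply H. Qed.
Lemma Hlat : lattice_on le setT. Proof. destruct HG as (_&_&_&_&_&_&_&H); apply H. Qed.

Lemma refl a : le a a. Proof. destruct Hpo as [H _]; apply H. Qed.
Lemma anti a b : le a b -> le b a -> a = b. Proof. destruct Hpo as [_ [H _]]; apply H. Qed.
Lemma trans a b c : le a b -> le b c -> le a c. Proof. destruct Hpo as [_ [_ H]]; eapply H; eauto. Qed.

Local Notation J := (join Hlat).
Local Notation M := (meet Hlat).
Local Notation cov a b := (covers_in le setT a b).

Lemma mulK a k : mul (mul a k) (inv k) = a. Proof. rewrite assoc, invr, idr; reflexivity. Qed.
Lemma mulKV a k : mul (mul a (inv k)) k = a. Proof. rewrite assoc, invl, idr; reflexivity. Qed.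
Lemma rle a b k : le (mul a k) (mul b k) -> le a b.
Proof. intro H. rewrite <- (mulK a k), <- (mulK b k). apply rinv; auto. Qed.
Lemma cancel_r a b k : mul a k = mul b k -> a = b.
Proof. intro H. rewrite <- (mulK a k), H, mulK; reflexivity. Qed.
Lemma cancel_l k a b : mul k a = mul k b -> a = b.
Proof. intro H. rewrite <- (idl a), <- (idl b), <- (invl k), !assoc, H; reflexivity. Qed.

Lemma rm_cov a b k : cov a b -> cov (mul a k) (mul b k).
Proof.
  intros (_&_&H1&H2&H3). split; [exact I|split; [exact I|split; [apply rinv; auto|split]]].
  - intro E; apply H2; apply cancel_r with k; auto.
  - intros c _ Hc1 Hc2. destruct (H3 (mul c (inv k)) I) as [E|E].
    + apply rle with k; rewrite mulKV; auto.
    + apply rle with k; rewrite mulKV; auto.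
    + left; rewrite <- E, mulKV; auto.
    + right; rewrite <- E, mulKV; auto.
Qed.

Lemma rm_lubL z l w k : lubL le z l w -> lubL le (mul z k) (map (fun x => mul x k) l) (mul w k).
Proof.
  intros [_ [U L]]. split; [exact I|split].
  - intros x [->|Hx].
    + apply rinv; apply U; left; auto.
    + apply in_map_iff in Hx as [y [<- Hy]]; apply rinv, U; right; auto.
  - intros y _ Hy.
    assert (H : le w (mul y (inv k))).
    { apply L; [exact I|]. intros x [->|Hx]; apply rle with k; rewrite mulKV; apply Hy.
      - left; auto.
      - right; apply in_map_iff; eauto. }
    rewrite <- (mulKV y k). apply rinv; auto.
Qed.

Lemma rm_glbL z l w k : glbL le z l w -> glbL le (mul z k) (map (fun x => mul x k) l) (mul w k).
Proof.
  intros [_ [U L]]. split; [exact I|split].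
  - intros x [->|Hx].
    + apply rinv; apply U; left; auto.
    + apply in_map_iff in Hx as [y [<- Hy]]; apply rinv, U; right; auto.
  - intros y _ Hy.
    assert (H : le (mul y (inv k)) w).
    { apply L; [exact I|]. intros x [->|Hx]; apply rle with k; rewrite mulKV; apply Hy.
      - left; auto.
      - right; apply in_map_iff; eauto. }
    rewrite <- (mulKV y k). apply rinv; auto.
Qed.

Lemma dcc_min g (M0 : T -> Prop) m0 : (forall m, M0 m -> le g m) -> M0 m0 ->
  exists m, M0 m /\ forall m', M0 m' -> le m' m -> m' = m.
Proof.
  intros Hg Hm0. apply NNPP; intro Hno'.
  assert (Hst : forall m, M0 m -> exists m', M0 m' /\ le m' m /\ m' <> m).
  { intros m Hm. apply NNPP; intro Hn. apply Hno'. exists m. split; auto.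
    intros m' Hm' Hle. apply NNPP; intro Hne. apply Hn. exists m'; auto. }
  assert (step : forall x : {m | M0 m}, {y : {m | M0 m} | le (proj1_sig y) (proj1_sig x) /\ proj1_sig y <> proj1_sig x}).
  { intros [m Hm]. destruct (constructive_indefinite_description _ (Hst m Hm)) as [m' [H1 H2]].
    exists (exist _ m' H1). exact H2. }
  pose (F := fun n => nat_rect (fun _ => {m | M0 m}) (exist _ m0 Hm0) (fun _ x => proj1_sig (step x)) n).
  pose (f := fun n => proj1_sig (F n)).
  destruct (proj1 (Hno g) f) as [N HN].
  - intro n. apply Hg. exact (proj2_sig (F n)).
  - intro n. exact (proj1 (proj2_sig (step (F n)))).
  - apply (proj2 (proj2_sig (step (F N)))). change (f (S N) = f N). apply HN; lia.
Qed.

Variable t : T.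
Hypothesis Ht : glb_in le setT (fun g => cov e g) t.

Lemma t_le_e : le t e.
Proof.
  destruct (classic (exists x, cov e x)) as [[x Hx]|Hn].
  - apply trans with x; [destruct Ht as [_ [U _]]; apply U; exact Hx|].
    destruct Hx as (_&_&H&_); exact H.
  - assert (H : le (mul t t) t).
    { destruct Ht as [_ [_ L]]; apply L; [exact I|]. intros a Ha; exfalso; apply Hn; eauto. }
    apply rle with t. rewrite idl; exact H.
Qed.

Lemma t_fin : exists F, (forall x, In x F -> cov e x) /\ glbL le e F t.
Proof.
  pose (M0 := fun m => exists F, (forall x, In x F -> cov e x) /\ glbL le e F m).
  assert (Hlow : forall m, M0 m -> le t m).
  { intros m [F [HF Hm]]. destruct Hm as [_ [_ L]]. apply L; [exact I|].
    intros x [->|Hx]; [apply t_le_e|]. destruct Ht as [_ [U _]]. apply U. auto. }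
  destruct (@dcc_min t M0 e Hlow) as [m [[F [HF Hm]] Hmin]].
  - exists []. split; [intros x []|apply (glbL_nil Hpo)].
  - exists F. split; auto.
    assert (E : m = t).
    { apply anti.
      - destruct Ht as [_ [_ L]]. apply L; [exact I|]. intros x Hx.
        assert (E : M x m = m).
        { apply Hmin; [|apply meet_r].
          exists (x :: F); split; [intros y [<-|Hy]; auto|]. apply glbL_cons; auto. exact Hpo. }
        rewrite <- E. apply meet_l.
      - apply Hlow. exists F; auto. }
    subst; auto.
Qed.

Lemma mainpart : lub_in le setT (fun g => cov g e) (inv t) /\
  modular_geometric_on le (fun x => le e x /\ le x (inv t)).
Proof.
  set (s := inv t).
  destruct t_fin as [F [HF Hft]].
  destruct (lemA' Hpo Hlat Hmod F HF Hft) as [ml [Hml Hlub]].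
  change (lubL le t ml e) in Hlub.
  pose proof (rm_lubL s Hlub) as Hs. unfold s in Hs at 1. rewrite invr, idl in Hs.
  set (L := map (fun x => mul x s) ml) in Hs.
  assert (HL : forall a, In a L -> cov a e).
  { intros a Ha. apply in_map_iff in Ha as [m [<- Hm]].
    pose proof (rm_cov s (Hml m Hm)) as H. unfold s in H at 2. rewrite invr in H. exact H. }
  assert (Hes : le e s) by (destruct Hs as [_ [U _]]; apply U; left; auto).
  assert (Hcs : forall g, cov g e -> le g s).
  { intros g Hg. set (w := J g s).
    pose proof (lubL_cons Hpo Hlat g Hs) as Hw. fold w in Hw.
    assert (HgL : forall a, In a (g :: L) -> cov a e) by (intros a [<-|Ha]; auto).
    destruct (lemA Hpo Hlat Hmod HgL Hw) as [mlw [Hmlw Hgw]].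
    pose proof (rm_glbL (inv w) Hgw) as Hg2. rewrite invr, idl in Hg2.
    assert (Htw : le t (inv w)).
    { destruct Hg2 as [_ [_ L2]]. apply L2; [exact I|]. intros x [->|Hx]; [apply t_le_e|].
      apply in_map_iff in Hx as [m [<- Hm]]. destruct Ht as [_ [U _]]. apply U.
      pose proof (rm_cov (inv w) (Hmlw m Hm)) as H. rewrite invr in H. exact H. }
    set (r := mul (inv w) s).
    assert (Her : le e r).
    { pose proof (rinv s Htw) as H. unfold s in H at 1. rewrite invr in H. exact H. }
    assert (Hwr : mul w r = s) by (unfold r; rewrite <- assoc, invr, idl; reflexivity).
    assert (Hsw : le s w) by apply join_r.
    assert (Hew : le e w) by (apply trans with g; [destruct Hg as (_&_&H&_); exact H|apply join_l]).
    assert (Hpw : forall n, le e (rpow mul e r n)).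
    { induction n as [|n IH]; simpl; [apply refl|].
      apply trans with (rpow mul e r n); auto.
      rewrite <- (idl (rpow mul e r n)) at 1. apply rinv; exact Her. }
    destruct (proj1 (Hno e) (fun n => mul w (rpow mul e r n))) as [N HN].
    - intro n. apply trans with (rpow mul e r n); auto.
      rewrite <- (idl (rpow mul e r n)) at 1. apply rinv; exact Hew.
    - intro n. simpl. rewrite <- assoc, Hwr. apply rinv; exact Hsw.
    - specialize (HN (S N) ltac:(lia)). simpl in HN.
      rewrite <- assoc, Hwr in HN. apply cancel_r in HN.
      rewrite HN. apply join_l. }
  split.
  - split; [exact I|split]; [exact Hcs|].
    intros y _ Hy. destruct Hs as [_ [_ Ls]]. apply Ls; [exact I|].
    intros x [->|Hx]; [|apply Hy, HL; auto].
    destruct (classic (exists g, cov g e)) as [[g Hg]|Hn].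
    + apply trans with g; [destruct Hg as (_&_&H&_); exact H|apply Hy; exact Hg].
    + assert (Hnx : forall x, ~ cov e x).
      { intros x Hx. apply Hn. exists (inv x).
        pose proof (rm_cov (inv x) Hx) as H. rewrite idl, invr in H. exact H. }
      assert (H1 : le (inv y) t).
      { destruct Ht as [_ [_ L1]]. apply L1; [exact I|]. intros a Ha; exfalso; eapply Hnx; eauto. }
      pose proof (rinv y (trans H1 t_le_e)) as H. rewrite invl, idl in H. exact H.
  - pose (P := fun x => le e x /\ le x s).
    assert (lubP : forall a b, P a -> P b -> lub_in le P (pair a b) (J a b)).
    { intros a b [Ha1 Ha2] [Hb1 Hb2]. split; [split|split].
      - apply trans with a; auto. apply join_l.
      - apply join_min; auto.
      - intros x [-> | ->]; [apply join_l|apply join_r].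
      - intros y [Hy1 Hy2] Hy. apply join_min; apply Hy; [left|right]; auto. }
    assert (glbP : forall a b, P a -> P b -> glb_in le P (pair a b) (M a b)).
    { intros a b [Ha1 Ha2] [Hb1 Hb2]. split; [split|split].
      - apply meet_max; auto.
      - apply trans with a; auto. apply meet_l.
      - intros x [-> | ->]; [apply meet_l|apply meet_r].
      - intros y [Hy1 Hy2] Hy. apply meet_max; apply Hy; [left|right]; auto. }
    split; [|split; [|split]].
    + intros a b Pa Pb. split; [exists (J a b)|exists (M a b)]; auto.
    + intros a b c x y z w Pa Pb Pc Hac Hx Hy Hz Hw.
      pose proof (glbP b c Pb Pc) as Gx. rewrite <- (glb_uniq Hpo Hx Gx) in Gx.
      assert (Px : P x) by (destruct Gx as [H _]; exact H).
      rewrite (glb_uniq Hpo Hx (glbP b c Pb Pc)) in *.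
      rewrite (lub_uniq Hpo Hy (lubP a _ Pa Px)).
      pose proof (lubP a b Pa Pb) as Gz.
      assert (Pz : P (J a b)) by (destruct Gz as [H _]; exact H).
      rewrite (lub_uniq Hpo Hz Gz) in Hw.
      rewrite (glb_uniq Hpo Hw (glbP _ c Pz Pc)).
      apply modl; auto; exact Hpo.
    + exists (length L). intros k f Hf Hc.
      apply (lemFL Hpo Hlat Hmod HL Hs f); auto.
    + intros x [Hex Hxs].
      destruct (atomistic Hpo Hlat Hmod x HL Hs Hex Hxs) as [lx [Hlx Hlubx]].
      exists lx. split.
      * intros a Ha. exists e. split.
        -- split; [split; [apply refl|exact Hes]|intros y [Hy _]; exact Hy].
        -- destruct (Hlx a Ha) as (_&_&H1&H2&H3).
           assert (Hax : le a x) by (destruct Hlubx as [_ [U _]]; apply U; right; auto).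
           split; [split; [exact H1|apply trans with x; auto]|].
           split; [split; [apply refl|exact Hes]|].
           split; [exact H1|split; [exact H2|]].
           intros c [Hc1 Hc2] Hc3 Hc4; apply H3; auto; exact I.
      * split; [split; auto|split].
        -- intros a Ha; destruct Hlubx as [_ [U _]]; apply U; right; auto.
        -- intros y [Hy1 Hy2] Hy; destruct Hlubx as [_ [_ Lx]]; apply Lx; [exact I|].
           intros q [->|Hq]; auto.
Qed.
End Grp.

Theorem mainTheorem10 (T : Type) (mul : T -> T -> T) (inv : T -> T) (e : T)
  (le : T -> T -> Prop) (t : T) :
  right_lgroup mul inv e le ->
  modular_on le setT ->
  noetherian le ->
  glb_in le setT (fun g => covers_in le setT e g) t ->
  lub_in le setT (fun g => covers_in le setT g e) (inv t) /\
  modular_geometric_on le (fun x => le e x /\ le x (inv t)).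
Proof.
  intros HG Hmod Hno Ht. exact (mainpart HG Hmod Hno Ht).
Qed.
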